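(* Let $f:\mathbb{R}^d\to\mathbb{R}$ be twice differentiable and suppose there is $M>0$ with $\|\nabla^2 f(x)-\nabla^2 f(y)\|_{\mathrm{op}}\le M\|x-y\|$ for all $x,y$. Let $(x_k)_{k\in\mathbb{N}}$ be generated by the inner iteration described in the context. Then for all $k\ge1$, $$f(x_k)-f(x_0)\le\frac{\delta^2k}{2\sigma}-\frac38\frac{\|(k+1)\bar g_k\|^{4/3}}{\sigma^{1/3}}-\frac{\sigma}{8k^2}S_k^2+\frac{M}{12}S_k^{3/2}+\frac{1}{2\sigma}\sum_{i=0}^{k-1}\frac{\|r_i\|^2}{\|s_i\|^2},$$ where $\frac{\|r_i\|^2}{\|s_i\|^2}$ is set to $0$ if $s_i=0$.
   Context: Inner iteration (parameters $\sigma,\delta>0$, $\theta\in(0,1)$): given $x_0\in\mathbb{R}^d$ and a real symmetric matrix $B_0$, for $k=0,1,\dots$: let $m_k(s):=\langle \nabla f(x_k)+\frac{1}{k+1}\sum_{i=0}^k(2i+1)\nabla f(x_i),s\rangle+\frac12\langle B_ks,s\rangle+\frac{\sigma}{4}\|s\|^4$; choose any $s_k$ with $\|\nabla m_k(s_k)\|\le\delta\|s_k\|$; set $x_{k+1}=x_k+s_k$, $r_k=\nabla f(x_{k+1})-\nabla f(x_k)-B_ks_k$, and $B_{k+1}=\frac{1-\theta}{1+\theta}\big(B_k+\frac{r_ks_k^\top+s_kr_k^\top}{\|s_k\|^2}-\frac{\langle r_k,s_k\rangle}{\|s_k\|^4}s_ks_k^\top\big)$. Definitions for $k\ge1$: $\bar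 g_k:=\frac{1}{k(k+1)}\big(\sum_{i=0}^{k-1}(2i+1)\nabla f(x_i)+k\nabla f(x_k)\big)$ and $S_k:=\sum_{i=0}^{k-1}\|s_i\|^2$. *)

(* Defs.v *)
From HB Require Import structures.
From mathcomp Require Import all_boot all_order all_algebra.
From mathcomp Require Import all_classical all_reals all_analysis.
Set Implicit Arguments. Unset Strict Implicit. Unset Printing Implicit Defensive.
Import Order.TTheory GRing.Theory Num.Theory.
Import numFieldNormedType.Exports.
Local Open Scope classical_set_scope.
Local Open Scope ring_scope.

Section Defs.
Variables (R : realType) (d : nat).

Definition dot (u v : 'rV[R]_d) : R := \sum_(i < d) u ord0 i * v ord0 i.
Definition norm2 (u : 'rV[R]_d) : R := Num.sqrt (dot u u).

(* action of a matrix A on a vector v (v seen as a column): A v *)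
Definition matvec (A : 'M[R]_d) (v : 'rV[R]_d) : 'rV[R]_d := v *m A^T.

Definition outer (u v : 'rV[R]_d) : 'M[R]_d := u^T *m v.

Definition opnorm (L : 'rV[R]_d -> 'rV[R]_d) : R :=
  sup [set norm2 (L v) | v in [set v | norm2 v <= 1]].

Definition cvec (g : 'rV[R]_d -> 'rV[R]_d) (x : nat -> 'rV[R]_d) (k : nat)
  : 'rV[R]_d :=
  g (x k) + (k.+1%:R)^-1 *: \sum_(i < k.+1) ((2 * i + 1)%N%:R *: g (x i)).

(* gradient of the (cubic-quartic) model
   m_k(s) = <c_k,s> + 1/2 <B_k s,s> + sigma/4 ||s||^4, namely
   c_k + 1/2 (B_k + B_k^T) s + sigma ||s||^2 s  (= c_k + B_k s as B_k is symmetric) *)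
Definition model_grad (sigma : R) (c : 'rV[R]_d) (B : 'M[R]_d) (s : 'rV[R]_d)
  : 'rV[R]_d :=
  c + matvec (2^-1 *: (B + B^T)) s + (sigma * norm2 s ^+ 2) *: s.

Definition resid (g : 'rV[R]_d -> 'rV[R]_d) (x s : nat -> 'rV[R]_d)
  (B : nat -> 'M[R]_d) (k : nat) : 'rV[R]_d :=
  g (x k.+1) - g (x k) - matvec (B k) (s k).

(* B_{k+1} as prescribed (with Rocq's convention 1/0 = 0) *)
Definition Bnext (theta : R) (Bk : 'M[R]_d) (r s : 'rV[R]_d) : 'M[R]_d :=
  ((1 - theta) / (1 + theta)) *:
    (Bk + (norm2 s ^+ 2)^-1 *: (outer r s + outer s r)
        - (dot r s / norm2 s ^+ 4) *: outer s s).

(* \bar g_k for k >= 1 *)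
Definition gbar (g : 'rV[R]_d -> 'rV[R]_d) (x : nat -> 'rV[R]_d) (k : nat)
  : 'rV[R]_d :=
  ((k * k.+1)%N%:R)^-1 *:
    (\sum_(i < k) ((2 * i + 1)%N%:R *: g (x i)) + k%:R *: g (x k)).

Definition Ssum (s : nat -> 'rV[R]_d) (k : nat) : R :=
  \sum_(i < k) norm2 (s i) ^+ 2.

Definition sq_ratio (r s : 'rV[R]_d) : R :=
  if s == 0 then 0 else norm2 r ^+ 2 / norm2 s ^+ 2.

End Defs.

(* Main.v *)
Require Import Defs.
From HB Require Import structures.
From mathcomp Require Import all_boot all_order all_algebra.
From mathcomp Require Import all_classical all_reals all_analysis.
From mathcomp Require Import ring lra.
Import Order.TTheory GRing.Theory Num.Theory.
Import numFieldNormedType.Exports.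
Local Open Scope classical_set_scope.
Local Open Scope ring_scope.

Set Implicit Arguments. Unset Strict Implicit.


Section Euclid.
Variables (R : realType) (d : nat).
Implicit Types (u v w : 'rV[R]_d).

Lemma dotC u v : dot u v = dot v u.
Proof. by apply: eq_bigr => i _; rewrite mulrC. Qed.
Lemma dotDl u v w : dot (u + v) w = dot u w + dot v w.
Proof. by rewrite /dot -big_split; apply: eq_bigr => i _; rewrite mxE mulrDl. Qed.
Lemma dotZl a u v : dot (a *: u) v = a * dot u v.
Proof. by rewrite /dot mulr_sumr; apply: eq_bigr => i _; rewrite mxE mulrA. Qed.
Lemma dotNl u v : dot (- u) v = - dot u v.
Proof. by rewrite -scaleN1r dotZl mulN1r. Qed.
Lemma dotBl u v w : dot (u - v) w = dot u w - dot v w.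
Proof. by rewrite dotDl dotNl. Qed.
Lemma dotDr u v w : dot w (u + v) = dot w u + dot w v.
Proof. by rewrite dotC dotDl !(dotC w). Qed.
Lemma dotZr a u v : dot v (a *: u) = a * dot v u.
Proof. by rewrite dotC dotZl dotC. Qed.
Lemma dotBr u v w : dot w (u - v) = dot w u - dot w v.
Proof. by rewrite dotC dotBl !(dotC w). Qed.
Lemma dot0l v : dot 0 v = 0.
Proof. by rewrite -(scale0r 0) dotZl mul0r. Qed.
Lemma dot0r v : dot v 0 = 0.
Proof. by rewrite dotC dot0l. Qed.
Lemma dot_ge0 u : 0 <= dot u u.
Proof. by apply: sumr_ge0 => i _; rewrite -expr2 sqr_ge0. Qed.
Lemma dot_eq0 u : dot u u = 0 -> u = 0.
Proof.
move/eqP; rewrite psumr_eq0; last by move=> i _; rewrite -expr2 sqr_ge0.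
move/allP => H; apply/rowP => i; rewrite mxE.
have := H i (mem_index_enum _); rewrite /= mulf_eq0 orbb => /eqP //.
Qed.
Lemma norm2_ge0 u : 0 <= norm2 u.
Proof. exact: sqrtr_ge0. Qed.
Lemma norm2_sq u : norm2 u ^+ 2 = dot u u.
Proof. by rewrite sqr_sqrtr // dot_ge0. Qed.
Lemma norm2_0 : norm2 (0 : 'rV[R]_d) = 0.
Proof. by rewrite /norm2 dot0l sqrtr0. Qed.
Lemma norm2_eq0 u : norm2 u = 0 -> u = 0.
Proof. by move=> H; apply: dot_eq0; rewrite -norm2_sq H expr0n. Qed.
Lemma norm2Z a u : norm2 (a *: u) = `|a| * norm2 u.
Proof.
by rewrite /norm2 dotZl dotZr mulrA -expr2 sqrtrM ?sqr_ge0 // sqrtr_sqr.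
Qed.
Lemma norm2N u : norm2 (- u) = norm2 u.
Proof. by rewrite -scaleN1r norm2Z normrN normr1 mul1r. Qed.

Lemma CS_sq u v : dot u v ^+ 2 <= dot u u * dot v v.
Proof.
have [v0|vn0] := eqVneq (dot v v) 0.
  by rewrite (dot_eq0 v0) dot0r dot0l expr0n mulr0.
have vp : 0 < dot v v by rewrite lt0r vn0 dot_ge0.
set t := dot u v / dot v v.
have := dot_ge0 (u - t *: v).
rewrite !dotBl !dotBr !dotZl !dotZr (dotC v u).
have e : t * dot v v = dot u v by rewrite /t divfK.
rewrite e => H.
have H1 : 0 <= dot u u - t * dot u v by lra.
have : 0 <= (dot u u - t * dot u v) * dot v v by apply: mulr_ge0 => //; exact: ltW.
rewrite mulrBl -mulrA (mulrC (dot u v)) mulrA e subr_ge0 => H3.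
by rewrite expr2 mulrC.
Qed.

Lemma CS u v : `|dot u v| <= norm2 u * norm2 v.
Proof.
rewrite /norm2 -sqrtrM ?dot_ge0 // -sqrtr_sqr ler_sqrt ?mulr_ge0 ?dot_ge0 //.
exact: CS_sq.
Qed.

Lemma norm2D u v : norm2 (u + v) <= norm2 u + norm2 v.
Proof.
have h0 : 0 <= norm2 u + norm2 v by rewrite addr_ge0 ?norm2_ge0.
rewrite -(ger0_norm h0) -sqrtr_sqr /norm2 ler_sqrt ?sqr_ge0 //.
rewrite -!/(norm2 _) sqrrD !norm2_sq dotDl !dotDr (dotC v u).
have := CS u v; have := ler_norm (dot u v); lra.
Qed.

End Euclid.


Section Op.
Variables (R : realType) (d : nat).
Variable L : 'rV[R]_d -> 'rV[R]_d.
Hypothesis LD : forall u v, L (u + v) = L u + L v.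
Hypothesis LZ : forall a u, L (a *: u) = a *: L u.

Lemma L0 : L 0 = 0.
Proof. by have := LZ 0 0; rewrite !scale0r. Qed.

Lemma Lsum (I : finType) (a : I -> R) (w : I -> 'rV[R]_d) :
  L (\sum_i a i *: w i) = \sum_i a i *: L (w i).
Proof.
elim/big_rec2: _ => [|i y1 y2 _ <-]; first exact: L0.
by rewrite LD LZ.
Qed.

Lemma norm2_sum (I : finType) (w : I -> 'rV[R]_d) :
  norm2 (\sum_i w i) <= \sum_i norm2 (w i).
Proof.
elim/big_rec2: _ => [|i y1 y2 _ H]; first by rewrite norm2_0.
by apply: le_trans (@norm2D _ _ _ _) _; rewrite lerD2l.
Qed.

Lemma coord_le (u : 'rV[R]_d) j : `|u ord0 j| <= norm2 u.
Proof.
rewrite -sqrtr_sqr /norm2 ler_sqrt ?dot_ge0 //.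
rewrite /dot (bigD1 j) //= expr2 lerDl.
by apply: sumr_ge0 => i _; rewrite -expr2 sqr_ge0.
Qed.

Lemma opnorm_has_sup :
  has_sup [set norm2 (L v) | v in [set v | norm2 v <= 1]].
Proof.
split; first by exists (norm2 (L 0)), 0 => //=; rewrite norm2_0.
exists (\sum_j norm2 (L (delta_mx 0 j))) => _ [u /= Hu <-].
rewrite [u]row_sum_delta Lsum.
apply: le_trans (norm2_sum _) _; apply: ler_sum => j _.
rewrite norm2Z ler_piMl ?norm2_ge0 //.
exact: le_trans (coord_le _ _) Hu.
Qed.

Lemma opnorm_bound v : norm2 (L v) <= opnorm L * norm2 v.
Proof.
have [v0|vn0] := eqVneq (norm2 v) 0.
  by rewrite (norm2_eq0 v0) L0 norm2_0 mulr0.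
have vp : 0 < norm2 v by rewrite lt0r vn0 norm2_ge0.
have : norm2 (L ((norm2 v)^-1 *: v)) <= opnorm L.
  apply: sup_upper_bound; first exact: opnorm_has_sup.
  exists ((norm2 v)^-1 *: v) => //=.
  by rewrite norm2Z ger0_norm ?invr_ge0 ?norm2_ge0 // mulVf.
rewrite LZ norm2Z ger0_norm ?invr_ge0 ?norm2_ge0 //.
by rewrite ler_pdivrMl // mulrC.
Qed.
End Op.


Section Line.
Variables (R : realType) (d : nat).

Lemma line_derive (W : normedModType R) (F : 'rV[R]_d -> W) (y h : 'rV[R]_d) (t : R) :
  differentiable F (y + t *: h) ->
  is_derive t 1 (fun u : R => F (y + u *: h)) ('d F (y + t *: h) h).
Proof.
move=> dF.
have Heq : (fun u : R => u^-1 *: (((fun u0 : R => F (y + u0 *: h)) \o shift t) (u *: 1)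
               - (fun u0 : R => F (y + u0 *: h)) t)) =
           (fun u : R => u^-1 *: ((F \o shift (y + t *: h)) (u *: h) - F (y + t *: h))).
  apply: funext => u /=.
  by rewrite [u *: 1]mulr1 scalerDl addrCA addrA.
split.
  rewrite /derivable Heq; exact: diff_derivable.
by rewrite /derive Heq -/(derive F (y + t *: h) h) deriveE.
Qed.


Section Coord.
Variables (g : 'rV[R]_d -> 'rV[R]_d) (i : 'I_d).
Let c : {linear 'rV[R]_d -> R}.
  by exists (fun N : 'rV[R]_d => N ord0 i); do 2![eexists]; do ?[constructor];
     rewrite ?mxE// => ? *; rewrite ?mxE//; move=> ?; rewrite !mxE.
Defined.
Let cc : continuous c. Proof. exact: coord_continuous. Qed.
Let dc w : differentiable c w. Proof. exact: linear_differentiable. Qed.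
Let ceq : (fun w => g w ord0 i) = c \o g. Proof. by []. Qed.

Lemma coord_differentiable z : differentiable g z ->
  differentiable (fun w => g w ord0 i) z.
Proof. by move=> dg; rewrite ceq; exact: differentiable_comp. Qed.

Lemma coord_d z h : differentiable g z ->
  'd (fun w => g w ord0 i) z h = 'd g z h ord0 i.
Proof. by move=> dg; rewrite ceq diff_comp // diff_lin. Qed.
End Coord.


End Line.

Section RD.
Variable R : realType.
Implicit Types (a b F dF : R -> R) (t : R).

Lemma isdD a b t da db : is_derive t 1 a da -> is_derive t 1 b db ->
  is_derive t 1 (fun u => a u + b u) (da + db).
Proof. by move=> ha hb; have := is_deriveD ha hb. Qed.
Lemma isdB a b t da db : is_derive t 1 a da -> is_derive t 1 b db ->
  is_derive t 1 (fun u => a u - b u) (da - db).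
Proof. by move=> ha hb; have := is_deriveB ha hb. Qed.
Lemma isdM a b t da db : is_derive t 1 a da -> is_derive t 1 b db ->
  is_derive t 1 (fun u => a u * b u) (a t * db + b t * da).
Proof. by move=> ha hb; have := is_deriveM ha hb. Qed.
Lemma isdC t (c : R) : is_derive t 1 (fun _ => c) 0.
Proof. exact: is_derive_cst. Qed.
Lemma isdI t : is_derive t 1 (fun u : R => u) 1.
Proof. exact: is_derive_id. Qed.

Lemma nonincr F dF (a b : R) : a <= b -> (forall t, is_derive t 1 F (dF t)) ->
  (forall t, a < t -> t < b -> dF t <= 0) -> F b <= F a.
Proof.
move=> ab hd hneg.
apply: (@ler0_derive1_nincr _ F a b) => //.
- move=> x; rewrite in_itv /= => /andP[h1 h2].
  by rewrite derive1E derive_val; exact: hneg.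
- apply: derivable_within_continuous => x _; by case: (hd x).
Qed.
End RD.


Section Trap.
Variables (R : realType) (d : nat) (f : 'rV[R]_d -> R) (g : 'rV[R]_d -> 'rV[R]_d) (M : R).
Hypothesis Hf : forall y, differentiable f y.
Hypothesis Hfg : forall y v, 'd f y v = dot (g y) v.
Hypothesis Hg : forall y, differentiable g y.
Hypothesis HM : forall y z, opnorm (fun v => 'd g y v - 'd g z v) <= M * norm2 (y - z).

Lemma dF (y h : 'rV[R]_d) (t : R) : is_derive t 1 (fun u : R => f (y + u *: h)) (dot (g (y + t *: h)) h).
Proof. by have := line_derive (Hf (y + t *: h)); rewrite Hfg. Qed.

Lemma dphi (y h : 'rV[R]_d) (t : R) : is_derive t 1 (fun u : R => dot (g (y + u *: h)) h)
   (dot ('d g (y + t *: h) h) h).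
Proof.
have -> : (fun u : R => dot (g (y + u *: h)) h) =
   \sum_(i < d) (fun u : R => g (y + u *: h) ord0 i * h ord0 i).
  by rewrite fct_sumE; apply: funext => u.
rewrite /dot; apply: is_derive_sum => i.
have H1 := line_derive (coord_differentiable i (Hg (y + t *: h))).
rewrite coord_d // in H1.
have := isdM H1 (isdC t (h ord0 i)).
by rewrite mulr0 add0r mulrC.
Qed.

Lemma phi_lip (y h : 'rV[R]_d) (u t : R) :
  `|dot ('d g (y + u *: h) h) h - dot ('d g (y + t *: h) h) h|
    <= M * norm2 h ^+ 3 * `|u - t|.
Proof.
rewrite -dotBl.
apply: le_trans (CS _ _) _.
pose L := fun v => 'd g (y + u *: h) v - 'd g (y + t *: h) v.
have LD : forall a b, L (a + b) = L a + L b.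
  move=> a b; rewrite /L /=.
  rewrite addrACA -opprD.
  by congr (_ - _); exact: linearD.
have LZ : forall (c : R) a, L (c *: a) = c *: L a.
  move=> c a; rewrite /L /= scalerBr.
  by congr (_ - _); exact: linearZ.
have H1 := opnorm_bound LD LZ h.
have H2 := HM (y + u *: h) (y + t *: h).
have e : y + u *: h - (y + t *: h) = (u - t) *: h.
  by rewrite scalerBl opprD addrACA subrr add0r.
rewrite e norm2Z in H2.
have nh := norm2_ge0 h.
have H3 : norm2 (L h) <= M * (`|u - t| * norm2 h) * norm2 h.
  apply: le_trans H1 _; exact: ler_wpM2r.
apply: le_trans (ler_wpM2r nh H3) _.
by rewrite le_eqVlt; apply/orP; left; apply/eqP; ring.
Qed.


Lemma stepA (y h : 'rV[R]_d) (t : R) : 0 <= t ->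
  dot (g (y + t *: h)) h - dot (g (y + 0 *: h)) h
   - t * dot ('d g (y + t *: h) h) h <= M * norm2 h ^+ 3 * (t * t) / 2.
Proof.
move=> t0.
pose Lc := M * norm2 h ^+ 3.
pose p' := dot ('d g (y + t *: h) h) h.
have dchi := fun u => isdD (isdB (isdB (dphi y h u) (isdM (isdI u) (isdC u p')))
   (isdM (isdC u (Lc * t)) (isdI u))) (isdM (isdC u (Lc / 2)) (isdM (isdI u) (isdI u))).
have := nonincr t0 dchi.
rewrite /= ?mulr0 ?mul0r ?addr0 ?mulr1 ?add0r ?subr0.
move=> H.
have {H} H : dot (g (y + t *: h)) h - t * p' - Lc * t * t + Lc / 2 * (t * t) <=
   dot (g (y + 0 *: h)) h.
  apply: H => u u0 ut.
  have Hl := phi_lip y h u t.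
  have e : `|u - t| = t - u by rewrite ler0_norm ?opprB // subr_le0 ltW.
  rewrite e in Hl.
  have Hn := ler_norm (dot ('d g (y + u *: h) h) h - p').
  have Hl' : dot ('d g (y + u *: h) h) h - p' <= Lc * (t - u) := le_trans Hn Hl.
  move: Hl'; clearbody p' Lc; move: (dot ('d g (y + u *: h) h) h) => q Hl'.
  lra.
clear dchi; move: H; rewrite /p' /Lc.
move: (dot (g (y + t *: h)) h) (dot (g (y + 0 *: h)) h)
  (dot ('d g (y + t *: h) h) h) (M * norm2 h ^+ 3) => a b c L H.
lra.
Qed.


Lemma trap (y h : 'rV[R]_d) :
  f (y + h) - f y <= 2^-1 * dot (g y + g (y + h)) h + M / 12 * norm2 h ^+ 3.
Proof.
pose Lc := M * norm2 h ^+ 3.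
pose p0 := dot (g (y + 0 *: h)) h.
have dE := fun u => isdB (isdB (isdB (dF y h u) (isdM (isdC u (2^-1 * p0)) (isdI u)))
     (isdM (isdC u 2^-1) (isdM (isdI u) (dphi y h u))))
     (isdM (isdC u (Lc / 12)) (isdM (isdI u) (isdM (isdI u) (isdI u)))).
have H := nonincr ler01 dE.
lapply H; last first.
  move=> u u0 u1.
  have A : dot (g (y + u *: h)) h - p0 - u * dot ('d g (y + u *: h) h) h
     <= Lc * (u * u) / 2 := stepA y h (ltW u0).
  move: A; clearbody p0 Lc; clear dE H.
  move: (dot (g (y + u *: h)) h) (dot ('d g (y + u *: h) h) h) => a b A.
  nra.
clear H dE => H.
move: H; rewrite /p0 /Lc scale1r scale0r addr0 dotDl.
move: (f (y + h)) (f y) (dot (g y) h) (dot (g (y + h)) h) (norm2 h ^+ 3) => a b c e n H.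
lra.
Qed.

End Trap.


Section Pow.
Variable R : realType.

Lemma rho3 (X s : R) : 0 <= X -> 0 < s -> ((X / s) `^ (1/3)) ^+ 3 = X / s.
Proof.
move=> X0 s0.
rewrite -powR_mulrn ?powR_ge0 // -powRrM.
have -> : (1 / 3 * 3%:R : R) = 1 by field.
by rewrite powRr1 // divr_ge0 // ltW.
Qed.

Lemma rho4 (X s : R) : 0 <= X -> 0 < s ->
  X `^ (4/3) / s `^ (1/3) = s * ((X / s) `^ (1/3)) ^+ 4.
Proof.
move=> X0 s0.
rewrite -powR_mulrn ?powR_ge0 // -powRrM.
have -> : (1 / 3 * 4%:R : R) = 4/3 by field.
have e1 : s `^ (4/3) = s * s `^ (1/3).
  have -> : (4/3 : R) = 1 + 1/3 by field.
  by rewrite powRD ?gt_eqF ?implybT // powRr1 // ltW.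
have e2 : X `^ (4/3) = (X / s) `^ (4/3) * s `^ (4/3).
  rewrite -powRM; first by rewrite divfK // gt_eqF.
    by rewrite divr_ge0 // ltW.
  exact: ltW.
have sp : 0 < s `^ (1/3) by apply: powR_gt0.
rewrite e2 e1; field.
by rewrite gt_eqF.
Qed.


Lemma young1 (p A : R) : 0 <= p -> 0 <= A -> 3 * p ^+ 4 * A <= 2 * p ^+ 6 + A ^+ 3.
Proof.
move=> p0 A0.
rewrite -subr_ge0.
have -> : 2 * p ^+ 6 + A ^+ 3 - 3 * p ^+ 4 * A = (p ^+ 2 - A) ^+ 2 * (2 * p ^+ 2 + A) by ring.
by apply: mulr_ge0; [exact: sqr_ge0 | apply: addr_ge0; [apply: mulr_ge0 => //; exact: sqr_ge0|]].
Qed.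

Lemma young2 (Y Z : R) : 0 <= Y -> 0 <= Z -> 4 * Y ^+ 3 * Z <= 3 * Y ^+ 4 + Z ^+ 4.
Proof.
move=> Y0 Z0.
rewrite -subr_ge0.
have -> : 3 * Y ^+ 4 + Z ^+ 4 - 4 * Y ^+ 3 * Z = (Y - Z) ^+ 2 * (3 * Y ^+ 2 + 2 * Y * Z + Z ^+ 2) by ring.
apply: mulr_ge0; first exact: sqr_ge0.
by rewrite !addr_ge0 ?mulr_ge0 ?sqr_ge0.
Qed.
End Pow.

Definition Phi (R : realType) (d : nat) (sg : R) (W : 'rV[R]_d) : R :=
  3 / 8 * (norm2 W `^ (4 / 3) / sg `^ (1 / 3)).

Section Steps.
Variables (R : realType) (d : nat).

Lemma dotNr (u w : 'rV[R]_d) : dot w (- u) = - dot w u.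
Proof. by rewrite dotC dotNl dotC. Qed.

Lemma Phi0 (sg : R) : Phi sg (0 : 'rV[R]_d) = 0.
Proof. by rewrite /Phi norm2_0 powR0 ?mul0r ?mulr0 // gt_eqF. Qed.

Lemma stepQ (sg l : R) (W s : 'rV[R]_d) : 0 < sg -> 0 <= l ->
  - (l / 2 * dot W s) <= Phi sg W + l ^+ 4 * sg / 8 * norm2 s ^+ 4.
Proof.
move=> s0 l0.
have nW := norm2_ge0 W; have na := norm2_ge0 s.
rewrite /Phi rho4 //.
have r3 := rho3 nW s0.
move: r3 (@powR_ge0 _ (norm2 W / sg) (1/3)).
move: ((norm2 W / sg) `^ (1 / 3)) => p r3 p0.
have eW : norm2 W = sg * p ^+ 3 by rewrite r3 mulrCA divff ?mulr1 // gt_eqF.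
have hcs : - dot W s <= norm2 W * norm2 s.
  apply: le_trans (CS W s); rewrite -normrN; exact: ler_norm.
rewrite eW in hcs.
have F1 : l * (- dot W s) <= l * (sg * p ^+ 3 * norm2 s) by exact: ler_wpM2l.
have hy := young2 p0 (mulr_ge0 l0 na).
have F2 : sg * (4 * p ^+ 3 * (l * norm2 s)) <= sg * (3 * p ^+ 4 + (l * norm2 s) ^+ 4).
  by apply: ler_wpM2l => //; exact: ltW.
move: F1 F2; move: (dot W s) (norm2 s) => ws a F1 F2.
lra.
Qed.

Lemma stepP (sg dl : R) (e r s : 'rV[R]_d) : 0 < sg -> norm2 e <= dl * norm2 s -> s != 0 ->
  2^-1 * dot (e + r - (sg * norm2 s ^+ 2) *: s) s <=
    dl ^+ 2 / (2 * sg) + (2 * sg)^-1 * (norm2 r ^+ 2 / norm2 s ^+ 2)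
    - Phi sg (e + r - (sg * norm2 s ^+ 2) *: s) - sg / 8 * norm2 s ^+ 4.
Proof.
move=> s0 he sn0.
set V := e + r - _ *: s.
have na := norm2_ge0 s.
have ap : 0 < norm2 s.
  by rewrite lt0r na andbT; apply/eqP => /norm2_eq0 /eqP; apply/negP.
have nV := norm2_ge0 V.
rewrite /Phi rho4 //.
have r3 := rho3 nV s0.
have dVV0 : dot V V = sg ^+ 2 * (((norm2 V / sg) `^ (1 / 3)) ^+ 3) ^+ 2.
  by rewrite -norm2_sq r3 -exprMn mulrCA divff ?mulr1 // gt_eqF.
move: r3 dVV0 (@powR_ge0 _ (norm2 V / sg) (1/3)).
move: ((norm2 V / sg) `^ (1 / 3)) => p _ dVV0 p0.
have eA : dot s s = norm2 s ^+ 2 by rewrite norm2_sq.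
have dVs : dot V s = dot (e + r) s - sg * norm2 s ^+ 2 * norm2 s ^+ 2.
  by rewrite /V dotBl dotZl eA.
have dVV : dot V V = dot (e + r) (e + r) - 2 * (sg * norm2 s ^+ 2) * dot (e + r) s
    + (sg * norm2 s ^+ 2) ^+ 2 * norm2 s ^+ 2.
  rewrite /V dotBl !dotBr !dotZl !dotZr eA (dotC s (e + r)); ring.
have pll : dot (e + r) (e + r) + dot (e - r) (e - r) = 2 * dot e e + 2 * dot r r.
  rewrite !dotDl !dotDr ?dotNl ?dotNr (dotC r e); ring.
have emr := dot_ge0 (e - r).
have ee : dot e e <= dl ^+ 2 * norm2 s ^+ 2.
  rewrite -norm2_sq -exprMn !expr2; apply: ler_pM => //; exact: norm2_ge0.
have rr : norm2 r ^+ 2 = dot r r by rewrite norm2_sq.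
have y1 := young1 p0 (ltW (exprn_gt0 2 ap)).
have Y1s : sg ^+ 2 * (3 * p ^+ 4 * norm2 s ^+ 2) <= sg ^+ 2 * (2 * p ^+ 6 + (norm2 s ^+ 2) ^+ 3).
  by apply: ler_wpM2l => //; rewrite sqr_ge0.
rewrite rr -subr_ge0.
set A := norm2 s ^+ 2.
have A0 : 0 < A by rewrite exprn_gt0.
have -> : norm2 s ^+ 4 = A ^+ 2 by rewrite /A -exprM.
set K := 4 * dl ^+ 2 * A + 4 * dot r r - 3 * sg ^+ 2 * p ^+ 4 * A - sg ^+ 2 * A ^+ 3
          - 4 * sg * A * dot V s.
have eK : dl ^+ 2 / (2 * sg) + (2 * sg)^-1 * (dot r r / A) - 3 / 8 * (sg * p ^+ 4) -
   sg / 8 * A ^+ 2 - 2^-1 * dot V s = K / (8 * sg * A).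
  by rewrite /K; field; rewrite ?gt_eqF.
rewrite eK; apply: divr_ge0; last by rewrite !mulr_ge0 // ltW.
rewrite /K dVs.
move: dVV0 dVV Y1s pll emr ee.
rewrite -/A.
move: (dot V V) (dot (e + r) (e + r)) (dot (e + r) s) (dot (e - r) (e - r)) (dot e e) (dot r r) => vv ww ws mm ee' rr' h1 h2 h3 h4 h5 h6.
nra.
Qed.
End Steps.


Section Alg.
Variables (R : realType) (d : nat).

Lemma outerT (u v : 'rV[R]_d) : (outer u v)^T = outer v u.
Proof. by rewrite /outer trmx_mul trmxK. Qed.

Lemma trZ (a : R) (X : 'M[R]_d) : (a *: X)^T = a *: X^T.
Proof. by apply/matrixP => i j; rewrite !mxE. Qed.
Lemma trD (X Y : 'M[R]_d) : (X + Y)^T = X^T + Y^T.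
Proof. by apply/matrixP => i j; rewrite !mxE. Qed.
Lemma trN (X : 'M[R]_d) : (- X)^T = - X^T.
Proof. by apply/matrixP => i j; rewrite !mxE. Qed.

Lemma BnextT (th : R) (Bk : 'M[R]_d) r s : Bk^T = Bk -> (Bnext th Bk r s)^T = Bnext th Bk r s.
Proof.
move=> hB; rewrite /Bnext trZ !trD trN !trZ trD hB !outerT.
by rewrite (addrC (outer s r)).
Qed.

Lemma matvec_sym (Bk : 'M[R]_d) (s : 'rV[R]_d) : Bk^T = Bk ->
  matvec (2^-1 *: (Bk + Bk^T)) s = matvec Bk s.
Proof.
move=> hB; rewrite hB; congr matvec.
by rewrite -[Bk in Bk + Bk]scale1r -scalerDl scalerA -[1 + 1]/(2%:R) mulVf ?scale1r // pnatr_eq0.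
Qed.
End Alg.

Section Vseq.
Variables (R : realType) (d : nat) (g : 'rV[R]_d -> 'rV[R]_d) (x : nat -> 'rV[R]_d).

Definition Vk k := k.+1%:R *: gbar g x k.
Definition Ssm k := \sum_(i < k) ((2 * i + 1)%N%:R *: g (x i)).

Lemma Vk0 : Vk 0 = 0.
Proof. by rewrite /Vk /gbar mul0n invr0 scale0r scaler0. Qed.

Lemma Vk_succ i : Vk i.+1 = (i.+1%:R)^-1 *: Ssm i.+1 + g (x i.+1).
Proof.
rewrite /Vk /gbar -/(Ssm i.+1) scalerA.
have e : (i.+2%:R * ((i.+1 * i.+2)%N%:R)^-1 : R) = (i.+1%:R)^-1.
  by rewrite natrM invfM mulrCA mulfV ?mulr1 // pnatr_eq0.
by rewrite e scalerDr scalerA mulVf ?pnatr_eq0 // scale1r.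
Qed.

Lemma Vsum i : g (x i) + g (x i.+1) = Vk i.+1 - (i%:R / i.+1%:R) *: Vk i.
Proof.
rewrite Vk_succ /Ssm big_ord_recr /= -/(Ssm i).
case: i => [|i].
  by rewrite /Ssm big_ord0 !mul0r scale0r subr0 add0r invr1 scale1r muln0 add0n scale1r.
rewrite /Vk /gbar -/(Ssm i.+1).
apply/rowP => j; rewrite !mxE.
rewrite !natrM !natrD.
have h1 : (i.+1%:R : R) != 0 by rewrite pnatr_eq0.
have h2 : (i.+2%:R : R) != 0 by rewrite pnatr_eq0.
move: h1 h2; rewrite -!addn1 !natrD => h1 h2.
field.
have i0 : (0:R) <= i%:R := ler0n _ _.
by rewrite !gt_eqF //; lra.
Qed.
End Vseq.

Lemma Vstep (R : realType) (d : nat) (g : 'rV[R]_d -> 'rV[R]_d) (x s : nat -> 'rV[R]_d)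
  (B : nat -> 'M[R]_d) (sg : R) i : (B i)^T = B i ->
  Vk g x i.+1 = model_grad sg (cvec g x i) (B i) (s i) + resid g x s B i
     - (sg * norm2 (s i) ^+ 2) *: s i.
Proof.
move=> hB.
rewrite Vk_succ /model_grad matvec_sym // /resid /cvec /Ssm.
apply/rowP => j; rewrite !mxE.
ring.
Qed.


Section Fin.
Variable R : realType.

Lemma sum_CS (k : nat) (F : 'I_k -> R) :
  (\sum_i F i) ^+ 2 <= k%:R * \sum_i F i ^+ 2.
Proof.
have := CS_sq (\row_i F i) (\row_(i < k) (1 : R)).
rewrite /dot.
have e1 : \sum_(i < k) (\row_i F i) ord0 i * (\row_(i < k) (1:R)) ord0 i = \sum_i F i.
  by apply: eq_bigr => i _; rewrite !mxE mulr1.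
have e2 : \sum_(i < k) (\row_i F i) ord0 i * (\row_i F i) ord0 i = \sum_i F i ^+ 2.
  by apply: eq_bigr => i _; rewrite !mxE expr2.
have e3 : \sum_(i < k) (\row_(i < k) (1:R)) ord0 i * (\row_(i < k) (1:R)) ord0 i = k%:R.
  rewrite (eq_bigr (fun _ => 1)); last by move=> i _; rewrite !mxE mulr1.
  by rewrite sumr_const card_ord.
by rewrite e1 e2 e3 mulrC.
Qed.

Lemma sum_cube (k : nat) (a : 'I_k -> R) : (forall i, 0 <= a i) ->
  \sum_i a i ^+ 3 <= (\sum_i a i ^+ 2) `^ (3 / 2).
Proof.
move=> a0.
set S := \sum_i a i ^+ 2.
have S0 : 0 <= S by apply: sumr_ge0 => i _; exact: sqr_ge0.
have -> : S `^ (3 / 2) = S * Num.sqrt S.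
  have -> : (3 / 2 : R) = 1 + 2^-1 by field.
  rewrite powRD; first by rewrite powRr1 // powR12_sqrt.
  apply/implyP => /eqP H; exfalso; move: H; lra.
rewrite /S mulr_suml; apply: ler_sum => i _.
rewrite exprSr; apply: ler_wpM2l; first exact: sqr_ge0.
rewrite -(ger0_norm (a0 i)) -sqrtr_sqr ler_sqrt //.
rewrite /S (bigD1 i) //= lerDl; apply: sumr_ge0 => j _; exact: sqr_ge0.
Qed.
End Fin.

Unset Implicit Arguments.

Theorem lemma4p3 (R : realType) (d : nat)
  (f : 'rV[R]_d -> R) (g : 'rV[R]_d -> 'rV[R]_d) (M sigma delta theta : R)
  (x s : nat -> 'rV[R]_d) (B : nat -> 'M[R]_d) :
  (forall y, differentiable f y) ->
  (forall y v, 'd f y v = dot (g y) v) ->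
  (forall y, differentiable g y) ->
  0 < M ->
  (forall y z, opnorm (fun v => 'd g y v - 'd g z v) <= M * norm2 (y - z)) ->
  0 < sigma -> 0 < delta -> 0 < theta < 1 ->
  (B 0%N)^T = B 0%N ->
  (forall k, norm2 (model_grad sigma (cvec g x k) (B k) (s k))
             <= delta * norm2 (s k)) ->
  (forall k, x k.+1 = x k + s k) ->
  (forall k, B k.+1 = Bnext theta (B k) (resid g x s B k) (s k)) ->
  forall k : nat, (1 <= k)%N ->
    f (x k) - f (x 0%N) <=
      delta ^+ 2 * k%:R / (2 * sigma)
      - 3 / 8 * (norm2 (k.+1%:R *: gbar g x k) `^ (4 / 3) / sigma `^ (1 / 3))
      - sigma / (8 * k%:R ^+ 2) * Ssum s k ^+ 2
      + M / 12 * Ssum s k `^ (3 / 2)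
      + (2 * sigma)^-1 * \sum_(i < k) sq_ratio (resid g x s B i) (s i).
Proof.
move=> Hf Hfg Hg M0 HM s0 d0 _ B0 Hmg Hx HB k k1.
have symB : forall i, (B i)^T = B i.
  elim => [|i IH]; first exact: B0.
  by rewrite HB; exact: BnextT.
pose lam (i : nat) : R := i%:R / i.+1%:R.
have lam0 : forall i, 0 <= lam i by move=> i; rewrite /lam divr_ge0 ?ler0n.
have step : forall i : nat,
  f (x i.+1) - f (x i) <= delta ^+ 2 / (2 * sigma)
    + (2 * sigma)^-1 * sq_ratio (resid g x s B i) (s i)
    - Phi sigma (Vk g x i.+1) + Phi sigma (Vk g x i)
    - sigma / 8 * ((1 - lam i ^+ 4) * norm2 (s i) ^+ 4)
    + M / 12 * norm2 (s i) ^+ 3.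
  move=> i.
  have T := trap Hf Hfg Hg HM (x i) (s i).
  rewrite -Hx in T.
  have {}T : f (x i.+1) - f (x i) <= 2^-1 * dot (g (x i) + g (x i.+1)) (s i)
     + M / 12 * norm2 (s i) ^+ 3 := T.
  rewrite (Vsum g x i) dotBl -/(lam i) (dotZl (lam i)) in T.
  have Q := stepQ (Vk g x i) (s i) s0 (lam0 i).

  have [sz|snz] := eqVneq (s i) 0.
    have ez : model_grad sigma (cvec g x i) (B i) (s i) = 0.
      apply: norm2_eq0; apply/le_anti/andP; split; last exact: norm2_ge0.
      by have := Hmg i; rewrite sz norm2_0 mulr0.
    have rz : resid g x s B i = 0.
      by rewrite /resid Hx sz addr0 subrr /matvec mul0mx subr0.
    have V1 : Vk g x i.+1 = 0.
      by rewrite (@Vstep _ _ g x s B sigma i (symB i)) ez rz sz scaler0 !addr0 subr0.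
    have sq0 : sq_ratio (resid g x s B i) (s i) = 0 by rewrite /sq_ratio sz eqxx.
    move: T Q; rewrite V1 Phi0 sq0 sz dot0l !dot0r norm2_0.
    have dd : 0 <= delta ^+ 2 / (2 * sigma) by rewrite divr_ge0 ?sqr_ge0 // mulr_ge0 // ltW.
    move: (Phi sigma (Vk g x i)) (f (x i.+1)) (f (x i)) dd => P a b dd.
    rewrite !expr0n /=.
    lra.
  have P := stepP (resid g x s B i) s0 (Hmg i) snz.
  rewrite -(@Vstep _ _ g x s B sigma i (symB i)) in P.
  have sqe : sq_ratio (resid g x s B i) (s i) = norm2 (resid g x s B i) ^+ 2 / norm2 (s i) ^+ 2.
    by rewrite /sq_ratio (negbTE snz).
  rewrite sqe.
  move: T Q P.
  move: (f (x i.+1)) (f (x i)) (dot (Vk g x i.+1) (s i)) (dot (Vk g x i) (s i))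
    (Phi sigma (Vk g x i.+1)) (Phi sigma (Vk g x i)) (norm2 (s i)) (lam i)
    (norm2 (resid g x s B i) ^+ 2 / norm2 (s i) ^+ 2) => a b c e P1 P0 n l q T Q P.
  lra.
have claim : forall n : nat,
  f (x n) - f (x 0%N) <= delta ^+ 2 * n%:R / (2 * sigma)
    + (2 * sigma)^-1 * \sum_(i < n) sq_ratio (resid g x s B i) (s i)
    - Phi sigma (Vk g x n)
    - sigma / 8 * \sum_(i < n) ((1 - lam i ^+ 4) * norm2 (s i) ^+ 4)
    + M / 12 * \sum_(i < n) norm2 (s i) ^+ 3.
  elim => [|n IH].
    by rewrite !big_ord0 Vk0 Phi0 subrr !mulr0 mul0r !subr0 !addr0.
  have St := step n.
  rewrite !big_ord_recr /= [n.+1%:R]mulrSr.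
  move: IH St.
  move: (f (x n.+1)) (f (x n)) (f (x 0%N)) (Phi sigma (Vk g x n.+1)) (Phi sigma (Vk g x n))
   (\sum_(i < n) sq_ratio (resid g x s B i) (s i)) (sq_ratio (resid g x s B n) (s n))
   (\sum_(i < n) ((1 - lam i ^+ 4) * norm2 (s i) ^+ 4)) ((1 - lam n ^+ 4) * norm2 (s n) ^+ 4)
   (\sum_(i < n) norm2 (s i) ^+ 3) (norm2 (s n) ^+ 3) => a b c P1 P0 q1 q2 t1 t2 u1 u2 IH St.
  lra.
have Hk := claim k.
have kp : (0:R) < k%:R by rewrite ltr0n.
have T1 : k%:R^-1 * \sum_(i < k) norm2 (s i) ^+ 4 <=
    \sum_(i < k) ((1 - lam i ^+ 4) * norm2 (s i) ^+ 4).
  rewrite mulr_sumr; apply: ler_sum => i _.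
  apply: ler_wpM2r; first exact: exprn_ge0 (norm2_ge0 _).
  have l1 : lam i <= 1 by rewrite /lam ler_pdivrMr ?ltr0n // mul1r ler_nat.
  have l4 : lam i ^+ 4 <= lam i.
    by rewrite exprS; apply: ler_piMr => //; exact: exprn_ile1.
  have e : 1 - lam i = (i.+1%:R)^-1.
    rewrite /lam; field; rewrite gt_eqF //; have := ler0n R i; lra.
  have : k%:R^-1 <= (i.+1%:R : R)^-1.
    by rewrite lef_pV2 ?posrE ?ltr0n // ler_nat.
  move=> H; move: l4 e H.
  move: (lam i) ((i.+1%:R : R)^-1) (k%:R^-1 : R) => L a b l4 e H.
  lra.
have T2 : Ssum s k ^+ 2 <= k%:R * \sum_(i < k) norm2 (s i) ^+ 4.
  have := sum_CS (fun i : 'I_k => norm2 (s i) ^+ 2).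
  rewrite /Ssum.
  have -> : \sum_(i < k) (norm2 (s i) ^+ 2) ^+ 2 = \sum_(i < k) norm2 (s i) ^+ 4.
    by apply: eq_bigr => i _; rewrite -exprM.
  done.
have F1 : sigma / (8 * k%:R ^+ 2) * Ssum s k ^+ 2 <=
    sigma / 8 * \sum_(i < k) ((1 - lam i ^+ 4) * norm2 (s i) ^+ 4).
  apply: le_trans (_ : _ <= sigma / (8 * k%:R ^+ 2) * (k%:R * \sum_(i < k) norm2 (s i) ^+ 4)) _.
    apply: ler_wpM2l => //; apply: divr_ge0; [exact: ltW | by rewrite mulr_ge0 // sqr_ge0].
  have -> : sigma / (8 * k%:R ^+ 2) * (k%:R * \sum_(i < k) norm2 (s i) ^+ 4) =
    sigma / 8 * (k%:R^-1 * \sum_(i < k) norm2 (s i) ^+ 4).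
    by field; rewrite gt_eqF.
  by apply: ler_wpM2l => //; rewrite divr_ge0 // ltW.
have F2 : M / 12 * \sum_(i < k) norm2 (s i) ^+ 3 <= M / 12 * Ssum s k `^ (3 / 2).
  apply: ler_wpM2l; first by rewrite divr_ge0 // ltW.
  have := @sum_cube R k (fun i : 'I_k => norm2 (s i)) (fun i => norm2_ge0 _).
  by rewrite /Ssum.
have -> : 3 / 8 * (norm2 (k.+1%:R *: gbar g x k) `^ (4 / 3) / sigma `^ (1 / 3))
   = Phi sigma (Vk g x k) by [].
move: Hk F1 F2.
move: (f (x k)) (f (x 0%N)) (Phi sigma (Vk g x k))
  (\sum_(i < k) sq_ratio (resid g x s B i) (s i))
  (\sum_(i < k) ((1 - lam i ^+ 4) * norm2 (s i) ^+ 4))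
  (\sum_(i < k) norm2 (s i) ^+ 3) (Ssum s k ^+ 2) (Ssum s k `^ (3 / 2)) => a b P q t u S2 S3 Hk F1 F2.
lra.
Qed.
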